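(* Consider a cake-division instance $\langle [n],\{v_a\}_{a\in[n]}\rangle$, let $\alpha\ge1$, let $\widetilde{\mathcal{I}}$ be an $\alpha$-approximately envy-free allocation and let $\mathcal{I}^*$ be a Nash optimal allocation. Then (i) $\mathrm{NSW}(\widetilde{\mathcal{I}})\ge\frac{1}{2\alpha}\mathrm{NSW}(\mathcal{I}^* )$; and (ii) $\mathcal{I}^*$ is $4$-approximately envy-free.
   Context: The cake is $[0,1]$. Each agent's valuation $v_a$ assigns a value $v_a(I)\ge0$ to every interval $I\subseteq[0,1]$ and is normalized ($v_a([0,1])=1$), divisible (for every interval $[x,y]$ and $\lambda\in[0,1]$ there is $z\in[x,y]$ with $v_a([x,z])=\lambda v_a([x,y])$; in particular single points have value $0$), and sigma additive ($v_a(I\cup J)=v_a(I)+v_a(J)$ for disjoint intervals). Intervals meeting only at an endpoint are regarded as disjoint. An allocation is a tuple $\mathcal{I}=\{I_1,\dots,I_n\}$ of pairwise-disjoint (possibly empty) intervals with $\bigcup_aI_a=[0,1]$, $I_a$ going to agent $a$. For $\alpha\ge1$, $\mathcal{I}$ is $\alpha$-approximately envy-free if $v_a(I_a)\ge\frac1\alpha v_a(I_b)$ for all $a,b$. $\mathrm{NSW}(\mathcal{I})=\left(\prod_a v_a(I_a)\right)^{1/n}$, and a Nash optimal allocation is one maximizing $\mathrm{NSW}$ over all allocations. *)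

(* Defs.v *)
From Stdlib Require Import Reals Lra Lia.
Open Scope R_scope.

(* An interval [x,y] of the cake is represented by its endpoints x <= y.
   Since single points have value 0 (divisibility), open/closed endpoints
   are immaterial; an empty interval is a degenerate one [x,x].
   A valuation v : R -> R -> R gives v x y = v([x,y]). *)

Definition valuation (v : R -> R -> R) : Prop :=
  (forall x y, 0 <= x -> x <= y -> y <= 1 -> 0 <= v x y) /\
  v 0 1 = 1 /\
  (forall x y lam, 0 <= x -> x <= y -> y <= 1 -> 0 <= lam -> lam <= 1 ->
     exists z, x <= z /\ z <= y /\ v x z = lam * v x y) /\
  (forall x y z, 0 <= x -> x <= y -> y <= z -> z <= 1 ->
     v x z = v x y + v y z).

(* Agents are 0, ..., n-1; agent a receives the interval [l a, r a]. *)
Definition is_allocation (n : nat) (l r : nat -> R) : Prop :=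
  (forall a, (a < n)%nat -> 0 <= l a /\ l a <= r a /\ r a <= 1) /\
  (* pairwise disjoint (meeting only at endpoints is allowed; empty
     intervals are disjoint from everything) *)
  (forall a b, (a < n)%nat -> (b < n)%nat -> a <> b ->
     l a = r a \/ l b = r b \/ r a <= l b \/ r b <= l a) /\
  (forall t, 0 <= t -> t <= 1 ->
     exists a, (a < n)%nat /\ l a <= t /\ t <= r a).

Definition approx_EF (n : nat) (v : nat -> R -> R -> R) (alpha : R)
    (l r : nat -> R) : Prop :=
  forall a b, (a < n)%nat -> (b < n)%nat ->
    v a (l a) (r a) >= / alpha * v a (l b) (r b).

Fixpoint prodR (n : nat) (f : nat -> R) : R :=
  match n with
  | O => 1
  | S m => prodR m f * f m
  end.

(* Nash social welfare: n-th root of the product of the values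
   (the product is nonnegative; its n-th root is 0 when it is 0). *)
Definition NSW (n : nat) (v : nat -> R -> R -> R) (l r : nat -> R) : R :=
  let P := prodR n (fun a => v a (l a) (r a)) in
  if Rlt_dec 0 P then Rpower P (/ INR n) else 0.

Definition nash_optimal (n : nat) (v : nat -> R -> R -> R)
    (l r : nat -> R) : Prop :=
  is_allocation n l r /\
  forall l' r', is_allocation n l' r' -> NSW n v l' r' <= NSW n v l r.

(* Main.v *)
Require Import Defs.
From Stdlib Require Import Reals Lra Lia Classical.
Open Scope R_scope.

Lemma exp_le' x y : x <= y -> exp x <= exp y.
Proof. intros H; destruct (Rle_lt_or_eq_dec _ _ H) as [h|h]; [left; apply exp_increasing; auto| subst; lra]. Qed.
Lemma ln_le' x y : 0 < x -> x <= y -> ln x <= ln y.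
Proof. intros H0 H; destruct (Rle_lt_or_eq_dec _ _ H) as [h|h]; [left; apply ln_increasing; auto| subst; lra]. Qed.

Fixpoint sumR (n : nat) (f : nat -> R) : R :=
  match n with O => 0 | S m => sumR m f + f m end.

Lemma sumR_le n f g : (forall i, (i < n)%nat -> f i <= g i) -> sumR n f <= sumR n g.
Proof. induction n; simpl; intros H. lra.
  assert (f n <= g n) by (apply H; lia).
  assert (sumR n f <= sumR n g) by (apply IHn; intros; apply H; lia). lra. Qed.
Lemma sumR_ext n f g : (forall i, (i < n)%nat -> f i = g i) -> sumR n f = sumR n g.
Proof. induction n; simpl; intros H. lra.
  rewrite H by lia. rewrite IHn; auto. Qed.
Lemma sumR_const n c : sumR n (fun _ => c) = INR n * c.
Proof. induction n; simpl sumR. simpl; lra. rewrite IHn, S_INR. lra. Qed.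
Lemma sumR_nonneg n f : (forall i, (i < n)%nat -> 0 <= f i) -> 0 <= sumR n f.
Proof. intros H. rewrite <- (Rmult_0_r (INR n)), <- sumR_const. apply sumR_le; auto. Qed.
Lemma sumR_plus n f g : sumR n (fun i => f i + g i) = sumR n f + sumR n g.
Proof. induction n; simpl. lra. rewrite IHn; lra. Qed.
Lemma sumR_scal n c f : sumR n (fun i => c * f i) = c * sumR n f.
Proof. induction n; simpl. lra. rewrite IHn; lra. Qed.
Lemma sumR_swap n m F : sumR n (fun a => sumR m (fun b => F a b)) = sumR m (fun b => sumR n (fun a => F a b)).
Proof. induction n; simpl.
  - rewrite sumR_const; ring.
  - rewrite IHn, <- sumR_plus. reflexivity. Qed.
Lemma sumR_upd n f a A : (a < n)%nat ->
  sumR n (fun i => if Nat.eqb i a then A else f i) = sumR n f - f a + A.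
Proof. induction n; intros Ha. lia. simpl.
  destruct (Nat.eqb_spec n a).
  - subst. rewrite (sumR_ext _ _ f). lra. intros i Hi. destruct (Nat.eqb_spec i a); [lia|auto].
  - rewrite IHn by lia. lra. Qed.
Lemma sumR_single n f i : (forall j, (j<n)%nat -> 0 <= f j) -> (i < n)%nat -> f i <= sumR n f.
Proof. intros H Hi. assert (0 <= sumR n (fun j => if Nat.eqb j i then 0 else f j)).
  apply sumR_nonneg. intros j Hj; destruct (Nat.eqb j i); [lra|auto].
  rewrite sumR_upd in H0 by auto. lra. Qed.

Lemma prodR_ext n f g : (forall i, (i < n)%nat -> f i = g i) -> prodR n f = prodR n g.
Proof. induction n; simpl; intros H. lra.
  rewrite H by lia. rewrite IHn; auto. Qed.
Lemma prodR_nonneg n f : (forall i, (i < n)%nat -> 0 <= f i) -> 0 <= prodR n f.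
Proof. induction n; simpl; intros H. lra.
  apply Rmult_le_pos. apply IHn; intros; apply H; lia. apply H; lia. Qed.
Lemma prodR_pos n f : (forall i, (i < n)%nat -> 0 < f i) -> 0 < prodR n f.
Proof. induction n; simpl; intros H. lra.
  apply Rmult_lt_0_compat. apply IHn; intros; apply H; lia. apply H; lia. Qed.
Lemma prodR_le n f g : (forall i, (i < n)%nat -> 0 <= f i <= g i) -> prodR n f <= prodR n g.
Proof. induction n; simpl; intros H. lra.
  apply Rmult_le_compat. apply prodR_nonneg; intros; apply H; lia. apply H; lia.
  apply IHn; intros; apply H; lia. apply H; lia. Qed.
Lemma prodR_mult n f g : prodR n (fun i => f i * g i) = prodR n f * prodR n g.
Proof. induction n; simpl. lra. rewrite IHn; ring. Qed.
Lemma prodR_scal n c f : prodR n (fun i => c * f i) = c ^ n * prodR n f.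
Proof. induction n; simpl. lra. rewrite IHn; ring. Qed.
Lemma prodR_upd n f a A : (a < n)%nat ->
  prodR n (fun i => if Nat.eqb i a then A else f i) * f a = prodR n f * A.
Proof. induction n; intros Ha. lia. simpl.
  destruct (Nat.eqb_spec n a).
  - subst. rewrite (prodR_ext _ _ f). ring. intros i Hi. destruct (Nat.eqb_spec i a); [lia|auto].
  - replace (prodR n (fun i : nat => if Nat.eqb i a then A else f i) * f n * f a)
     with ((prodR n (fun i : nat => if Nat.eqb i a then A else f i) * f a) * f n) by ring.
    rewrite IHn by lia. ring. Qed.
Lemma prodR_pos_factor n f : (forall i, (i < n)%nat -> 0 <= f i) -> 0 < prodR n f ->
  forall i, (i < n)%nat -> 0 < f i.
Proof. induction n; simpl; intros H Hp i Hi. lia.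
  assert (0 <= prodR n f) by (apply prodR_nonneg; intros; apply H; lia).
  assert (0 <= f n) by (apply H; lia).
  assert (0 < f n). { destruct (Rle_lt_or_eq_dec _ _ H1); auto. rewrite <- e in Hp. lra. }
  assert (0 < prodR n f). { destruct (Rle_lt_or_eq_dec _ _ H0); auto. rewrite <- e in Hp. lra. }
  destruct (Nat.eq_dec i n). subst; auto. apply IHn; auto; try lia. Qed.

Lemma prod_exp n y : (forall i, (i < n)%nat -> 0 <= y i) -> prodR n y <= exp (sumR n y - INR n).
Proof. induction n; cbn [prodR sumR]; intros H. replace (0 - INR 0) with 0 by (simpl; ring); rewrite exp_0; lra.
  rewrite S_INR. replace (sumR n y + y n - (INR n + 1)) with ((sumR n y - INR n) + (y n - 1)) by ring.
  rewrite exp_plus. apply Rmult_le_compat. apply prodR_nonneg; intros; apply H; lia. apply H; lia.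
  apply IHn; intros; apply H; lia. generalize (exp_ineq1_le (y n - 1)). lra. Qed.

Lemma sum_atmost1 n (P : nat -> Prop) (f : nat -> R) :
  (forall i, (i<n)%nat -> f i = 0 \/ (f i = 1 /\ P i)) ->
  (forall i j, (i<n)%nat -> (j<n)%nat -> i <> j -> P i -> P j -> False) ->
  sumR n f = 0 \/ (sumR n f = 1 /\ exists i, (i < n)%nat /\ P i).
Proof. induction n; simpl; intros H1 H2. left; lra.
  destruct IHn as [h|[h [i [hi hp]]]]. intros; apply H1; lia. intros; apply (H2 i j); auto; lia.
  - destruct (H1 n) as [e|[e p]]. lia. left; lra. right; split. lra. exists n; split; auto.
  - destruct (H1 n) as [e|[e p]]. lia. right; split. lra. exists i; split; auto.
    exfalso; apply (H2 i n); auto; lia. Qed.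

Fixpoint minR (n:nat) (g:nat->R) : R := match n with O => 1 | S m => Rmin (minR m g) (g m) end.
Lemma minR_le n g i : (i<n)%nat -> minR n g <= g i.
Proof. induction n; simpl; intros H. lia. destruct (Nat.eq_dec i n). subst; apply Rmin_r.
  eapply Rle_trans. apply Rmin_l. apply IHn; lia. Qed.
Lemma minR_le1 n g : minR n g <= 1.
Proof. induction n; simpl. lra. eapply Rle_trans. apply Rmin_l. auto. Qed.
Lemma minR_gt n g t : t < 1 -> (forall i, (i<n)%nat -> t < g i) -> t < minR n g.
Proof. induction n; simpl; intros H1 H2. auto. apply Rmin_glb_lt. apply IHn; auto. apply H2; lia. Qed.

Lemma val_zero v p : valuation v -> 0 <= p -> p <= 1 -> v p p = 0.
Proof. intros (Hn & H1 & Hd & Ha) h0 h1. generalize (Ha p p p h0 (Rle_refl _) (Rle_refl _) h1). lra. Qed.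
Lemma val_nn v x y : valuation v -> 0 <= x -> x <= y -> y <= 1 -> 0 <= v x y.
Proof. intros (Hn & H1 & Hd & Ha); auto. Qed.
Lemma val_add v x y z : valuation v -> 0 <= x -> x <= y -> y <= z -> z <= 1 -> v x z = v x y + v y z.
Proof. intros (Hn & H1 & Hd & Ha); auto. Qed.
Lemma val_mono v x' x y y' : valuation v -> 0 <= x' -> x' <= x -> x <= y -> y <= y' -> y' <= 1 ->
  v x y <= v x' y'.
Proof. intros hv h0 h1 h2 h3 h4.
  rewrite (val_add v x' x y') by (auto; lra). rewrite (val_add v x y y') by (auto; lra).
  assert (0 <= v x' x) by (apply val_nn; auto; lra).
  assert (0 <= v y y') by (apply val_nn; auto; lra). lra. Qed.

Lemma right_cover n l r t : is_allocation n l r -> 0 <= t -> t < 1 ->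
  exists b, (b < n)%nat /\ l b <= t /\ t < r b.
Proof. intros (Hb & Hd & Hc) h0 h1.
  destruct (classic (exists b, (b < n)%nat /\ l b <= t /\ t < r b)) as [h|h]; auto. exfalso.
  set (g := fun b => if Rlt_dec t (l b) then l b else 1).
  assert (Hg : forall b, (b < n)%nat -> t < g b). { intros b _; unfold g; destruct (Rlt_dec t (l b)); lra. }
  assert (t < minR n g) by (apply minR_gt; auto).
  generalize (minR_le1 n g); intros.
  destruct (Hc ((t + minR n g)/2)) as [b [hb [h2 h3]]]; try lra.
  generalize (minR_le n g b hb); intros hm.
  destruct (Rlt_dec t (l b)). assert (g b = l b) by (unfold g; destruct (Rlt_dec t (l b)); lra). lra.
  apply h; exists b; split; auto; split; lra. Qed.

Definition clipv (v : R -> R -> R) (x y lb rb : R) : R :=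
  if Rlt_dec (Rmax x lb) (Rmin y rb) then v (Rmax x lb) (Rmin y rb) else 0.

Lemma clip_nn v x y lb rb : valuation v -> 0 <= lb -> rb <= 1 -> 0 <= clipv v x y lb rb.
Proof. intros hv h1 h2; unfold clipv. destruct (Rlt_dec _ _). 2: lra.
  apply val_nn; auto. generalize (Rmax_r x lb); lra. lra. generalize (Rmin_r y rb); lra. Qed.

Lemma clip_le v x y lb rb : valuation v -> 0 <= lb -> lb <= rb -> rb <= 1 -> clipv v x y lb rb <= v lb rb.
Proof. intros hv h1 h2 h3; unfold clipv. destruct (Rlt_dec _ _).
  apply val_mono; auto. apply Rmax_r. lra. apply Rmin_r. apply val_nn; auto. Qed.

Lemma cover_sum n v l r x y : valuation v -> is_allocation n l r -> 0 <= x -> x <= y -> y <= 1 ->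
  v x y <= sumR n (fun b => clipv v x y (l b) (r b)).
Proof. intros hv hA h0 h1 h2. pose proof hA as (Hb & Hd & Hc).
  set (cnt := fun p => sumR n (fun b => if Rlt_dec p (r b) then 1 else 0)).
  set (S := fun p => sumR n (fun b => if Rlt_dec p (r b) then clipv v x y (l b) (r b) else 0)).
  assert (Tnn : forall p b, (b < n)%nat -> 0 <= (if Rlt_dec p (r b) then clipv v x y (l b) (r b) else 0)).
  { intros p b hb; destruct (Rlt_dec _ _). apply clip_nn; auto; apply Hb; auto. lra. }
  assert (key : forall k p, x <= p -> p <= y -> cnt p <= INR k -> v p y <= S p).
  { induction k; intros p hp1 hp2 hc.
    - destruct (Rlt_dec p y).
      + destruct (right_cover n l r p hA) as [b0 [hb0 [h3 h4]]]; try lra.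
        assert (1 <= cnt p). { unfold cnt.
          assert (hh := sumR_single n (fun b => if Rlt_dec p (r b) then 1 else 0) b0).
          cbv beta in hh. destruct (Rlt_dec p (r b0)); [|lra]. apply hh; auto.
          intros; destruct (Rlt_dec _ _); lra. }
        simpl in hc; lra.
      + replace p with y by lra. rewrite val_zero; auto; try lra. apply sumR_nonneg; intros; apply Tnn; auto.
    - destruct (Rlt_dec p y).
      2: { replace p with y by lra. rewrite val_zero; auto; try lra. apply sumR_nonneg; intros; apply Tnn; auto. }
      destruct (right_cover n l r p hA) as [b0 [hb0 [h3 h4]]]; try lra.
      destruct (Hb b0 hb0) as [hl0 [hlr hr1]].
      set (q := Rmin (r b0) y).
      assert (hq1 : p <= q) by (unfold q; apply Rmin_glb; lra).
      assert (hq2 : q <= y) by (unfold q; apply Rmin_r).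
      assert (hq3 : q <= r b0) by (unfold q; apply Rmin_l).
      rewrite (val_add v p q y) by (auto; lra).
      assert (hpq : v p q <= clipv v x y (l b0) (r b0)).
      { unfold clipv. assert (Rmax x (l b0) <= p) by (apply Rmax_lub; lra).
        assert (Rmin y (r b0) = q) by (unfold q; apply Rmin_comm).
        rewrite H0. destruct (Rlt_dec _ _).
        apply val_mono; auto; try lra. generalize (Rmax_l x (l b0)); lra.
        exfalso. destruct (Rle_lt_or_eq_dec _ _ hq1). lra. subst q.
        unfold Rmin in e. destruct (Rle_dec (r b0) y); lra. }
      assert (hTb0 : clipv v x y (l b0) (r b0) = (if Rlt_dec p (r b0) then clipv v x y (l b0) (r b0) else 0)).
      { destruct (Rlt_dec p (r b0)); lra. }
      destruct (Rle_dec y (r b0)).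
      + assert (q = y) by (unfold q; unfold Rmin; destruct (Rle_dec (r b0) y); lra).
        rewrite H in hpq |- *. rewrite val_zero; auto; try lra.
        assert (clipv v x y (l b0) (r b0) <= S p).
        { rewrite hTb0. unfold S. apply (sumR_single n (fun b => if Rlt_dec p (r b) then clipv v x y (l b) (r b) else 0)); auto. }
        lra.
      + assert (hq : q = r b0) by (unfold q; unfold Rmin; destruct (Rle_dec (r b0) y); lra).
        assert (hcq : cnt q + 1 <= cnt p).
        { unfold cnt. assert (hu := sumR_upd n (fun b => if Rlt_dec q (r b) then 1 else 0) b0 1 hb0).
          cbv beta in hu. destruct (Rlt_dec q (r b0)); [lra|]. 
          assert (sumR n (fun i => if Nat.eqb i b0 then 1 else if Rlt_dec q (r i) then 1 else 0) <= sumR n (fun b => if Rlt_dec p (r b) then 1 else 0)); [|lra].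
          apply sumR_le. intros i hi. destruct (Nat.eqb_spec i b0). subst; destruct (Rlt_dec p (r b0)); lra.
          destruct (Rlt_dec q (r i)); destruct (Rlt_dec p (r i)); lra. }
        rewrite S_INR in hc.
        assert (IH : v q y <= S q) by (apply IHk; lra).
        assert (clipv v x y (l b0) (r b0) + S q <= S p).
        { unfold S. assert (hu := sumR_upd n (fun b => if Rlt_dec q (r b) then clipv v x y (l b) (r b) else 0) b0 (clipv v x y (l b0) (r b0)) hb0).
          cbv beta in hu. destruct (Rlt_dec q (r b0)); [lra|]. 
          assert (sumR n (fun i => if Nat.eqb i b0 then clipv v x y (l b0) (r b0) else if Rlt_dec q (r i) then clipv v x y (l i) (r i) else 0) <= sumR n (fun b => if Rlt_dec p (r b) then clipv v x y (l b) (r b) else 0)); [|lra].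
          apply sumR_le. intros i hi. destruct (Nat.eqb_spec i b0). subst; lra.
          destruct (Rlt_dec q (r i)); destruct (Rlt_dec p (r i)); try lra. apply clip_nn; auto; apply Hb; auto. }
        lra. }
  eapply Rle_trans. apply (key n x); try lra.
  - unfold cnt. rewrite <- (Rmult_1_r (INR n)), <- sumR_const. apply sumR_le; intros; destruct (Rlt_dec _ _); lra.
  - unfold S. apply sumR_le. intros i hi. destruct (Rlt_dec _ _). lra. apply clip_nn; auto; apply Hb; auto.
Qed.

Lemma alloc_n_pos n l r : is_allocation n l r -> (0 < n)%nat.
Proof. intros (_ & _ & Hc). destruct (Hc 0) as [a [ha _]]; lra || lia. Qed.

Lemma ef_bound n v alpha l r a b : (1 <= alpha) -> approx_EF n v alpha l r -> (a < n)%nat -> (b < n)%nat ->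
  v a (l b) (r b) <= alpha * v a (l a) (r a).
Proof. intros h1 hE ha hb. generalize (hE a b ha hb). intros H.
  apply Rge_le in H. apply (Rmult_le_compat_l alpha) in H; [|lra].
  rewrite <- Rmult_assoc, Rinv_r in H; lra. Qed.

Lemma u_pos n v alpha l r : (forall a, (a < n)%nat -> valuation (v a)) -> 1 <= alpha ->
  is_allocation n l r -> approx_EF n v alpha l r -> forall a, (a < n)%nat -> 0 < v a (l a) (r a).
Proof. intros hv h1 hA hE a ha. pose proof hA as (Hb & _ & _).
  assert (1 <= INR n * (alpha * v a (l a) (r a))).
  { destruct (hv a ha) as (_ & H01 & _). rewrite <- H01.
    eapply Rle_trans. apply (cover_sum n (v a) l r 0 1); auto; lra.
    rewrite <- (sumR_const n). apply sumR_le. intros b hb. destruct (Hb b hb) as (? & ? & ?).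
    eapply Rle_trans. apply clip_le; auto. apply (ef_bound n); auto. }
  assert (0 <= v a (l a) (r a)) by (destruct (Hb a ha) as (? & ? & ?); apply val_nn; auto).
  assert (0 <= INR n) by apply pos_INR.
  destruct (Rle_lt_or_eq_dec _ _ H0); auto. rewrite <- e in H. lra. Qed.

Lemma part1 n v alpha lt rt ls rs : (forall a, (a < n)%nat -> valuation (v a)) -> 1 <= alpha ->
  is_allocation n lt rt -> approx_EF n v alpha lt rt -> is_allocation n ls rs ->
  NSW n v lt rt >= / (2 * alpha) * NSW n v ls rs.
Proof. intros hv h1 hT hE hS.
  pose proof hT as (TB & TD & TC). pose proof hS as (SB & SD & SC).
  assert (hn := alloc_n_pos n lt rt hT).
  set (u := fun a => v a (lt a) (rt a)).
  set (f := fun a => v a (ls a) (rs a)).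
  assert (hu : forall a, (a < n)%nat -> 0 < u a) by (intros; apply (u_pos n v alpha); auto).
  assert (hf : forall a, (a < n)%nat -> 0 <= f a).
  { intros a ha; destruct (SB a ha) as (? & ? & ?); apply val_nn; auto. }
  set (ov := fun a b => if Rlt_dec (Rmax (ls a) (lt b)) (Rmin (rs a) (rt b)) then 1 else 0).
  set (O := fun a => sumR n (fun b => ov a b)).
  assert (hB : forall a, (a < n)%nat -> f a <= alpha * u a * O a).
  { intros a ha. destruct (SB a ha) as (? & ? & ?). unfold f, O.
    eapply Rle_trans. apply (cover_sum n (v a) lt rt (ls a) (rs a)); auto.
    rewrite <- sumR_scal. apply sumR_le. intros b hb. unfold clipv, ov.
    destruct (TB b hb) as (? & ? & ?).
    destruct (Rlt_dec (Rmax (ls a) (lt b)) (Rmin (rs a) (rt b))); [|lra].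
    rewrite Rmult_1_r. eapply Rle_trans. apply (val_mono (v a) (lt b) _ _ (rt b)); auto; try lra.
    apply Rmax_r. apply Rmin_r.
    apply (ef_bound n); auto. }
  assert (hC : sumR n O <= 2 * INR n).
  { set (o1 := fun a b => if Rlt_dec (Rmax (ls a) (lt b)) (Rmin (rs a) (rt b)) then (if Rle_dec (lt b) (ls a) then 1 else 0) else 0).
    set (o2 := fun a b => if Rlt_dec (Rmax (ls a) (lt b)) (Rmin (rs a) (rt b)) then (if Rle_dec (lt b) (ls a) then 0 else 1) else 0).
    assert (sumR n O = sumR n (fun a => sumR n (fun b => o1 a b)) + sumR n (fun b => sumR n (fun a => o2 a b))).
    { rewrite <- (sumR_swap n n o2), <- sumR_plus. apply sumR_ext; intros a ha. unfold O. rewrite <- sumR_plus.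
      apply sumR_ext; intros b hb. unfold ov, o1, o2. destruct (Rlt_dec (Rmax (ls a) (lt b)) (Rmin (rs a) (rt b))); destruct (Rle_dec (lt b) (ls a)); lra. }
    rewrite H. replace (2 * INR n) with (INR n * 1 + INR n * 1) by ring. rewrite <- !sumR_const.
    apply Rplus_le_compat; apply sumR_le.
    - intros a ha.
      destruct (sum_atmost1 n (fun b => Rmax (ls a) (lt b) < Rmin (rs a) (rt b) /\ lt b <= ls a) (fun b => o1 a b)) as [e|[e _]]; try lra.
      + intros b hb. unfold o1. destruct (Rlt_dec (Rmax (ls a) (lt b)) (Rmin (rs a) (rt b))); destruct (Rle_dec (lt b) (ls a)); auto.
      + intros b b' hb hb' hne [p1 p2] [p3 p4].
        generalize (Rmax_l (ls a) (lt b)) (Rmin_r (rs a) (rt b)) (Rmax_l (ls a) (lt b')) (Rmin_r (rs a) (rt b')).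
        destruct (TB b hb) as (? & ? & ?). destruct (TB b' hb') as (? & ? & ?).
        destruct (TD b b' hb hb' hne) as [|[|[|]]]; lra.
    - intros b hb.
      destruct (sum_atmost1 n (fun a => Rmax (ls a) (lt b) < Rmin (rs a) (rt b) /\ ~ lt b <= ls a) (fun a => o2 a b)) as [e|[e _]]; try lra.
      + intros a ha. unfold o2. destruct (Rlt_dec (Rmax (ls a) (lt b)) (Rmin (rs a) (rt b))); destruct (Rle_dec (lt b) (ls a)); auto.
      + intros a a' ha ha' hne [p1 p2] [p3 p4].
        generalize (Rmax_r (ls a) (lt b)) (Rmin_l (rs a) (rt b)) (Rmax_r (ls a') (lt b)) (Rmin_l (rs a') (rt b)).
        destruct (SB a ha) as (? & ? & ?). destruct (SB a' ha') as (? & ? & ?).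
        destruct (SD a a' ha ha' hne) as [|[|[|]]]; lra. }
  set (y := fun a => f a / (2 * alpha * u a)).
  assert (hy0 : forall a, (a < n)%nat -> 0 <= y a).
  { intros a ha; unfold y. apply Rmult_le_pos; auto. left; apply Rinv_0_lt_compat.
    generalize (hu a ha); nra. }
  assert (hy1 : sumR n y <= INR n).
  { apply Rle_trans with (sumR n (fun a => / 2 * O a)).
    - apply sumR_le; intros a ha. unfold y. generalize (hB a ha) (hu a ha); intros.
      apply (Rmult_le_reg_r (2 * alpha * u a)). nra. unfold Rdiv. rewrite Rmult_assoc, Rinv_l. nra. nra.
    - rewrite sumR_scal; lra. }
  assert (hP : prodR n f <= (2 * alpha) ^ n * prodR n u).
  { assert (prodR n y <= 1).
    { eapply Rle_trans. apply prod_exp; auto. rewrite <- exp_0. apply exp_le'. lra. }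
    replace (prodR n f) with (prodR n (fun a => (2 * alpha) * (u a * y a))).
    rewrite prodR_scal, prodR_mult. assert (0 <= prodR n u) by (apply prodR_nonneg; intros; left; auto).
    assert (0 <= (2*alpha)^n) by (apply pow_le; lra). 
    assert (0 <= prodR n y) by (apply prodR_nonneg; auto). assert (0 <= (2*alpha)^n * prodR n u) by (apply Rmult_le_pos; auto). nra.
    apply prodR_ext. intros a ha. unfold y. field. generalize (hu a ha); intros; split; lra. }
  assert (hPu : 0 < prodR n u) by (apply prodR_pos; auto).
  unfold NSW. fold u f. destruct (Rlt_dec 0 (prodR n u)); [|lra].
  destruct (Rlt_dec 0 (prodR n f)).
  2: { apply Rle_ge. rewrite Rmult_0_r. left; apply exp_pos. }
  unfold Rpower. apply Rle_ge.
  assert (hnr : 0 < INR n) by (apply lt_0_INR; auto).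
  assert (ln (prodR n f) <= INR n * ln (2 * alpha) + ln (prodR n u)).
  { rewrite <- ln_pow, <- ln_mult; try lra. apply ln_le'; auto. apply pow_lt; lra. }
  assert (/ INR n * ln (prodR n f) <= ln (2 * alpha) + / INR n * ln (prodR n u)).
  { apply (Rmult_le_compat_l (/ INR n)) in H. 2: left; apply Rinv_0_lt_compat; auto.
    replace (/ INR n * (INR n * ln (2 * alpha) + ln (prodR n u))) with (ln (2*alpha) + / INR n * ln (prodR n u)) in H. auto.
    field. lra. }
  apply exp_le' in H0. rewrite exp_plus, exp_ln in H0 by lra.
  apply (Rmult_le_compat_l (/ (2 * alpha))) in H0. 2: left; apply Rinv_0_lt_compat; lra.
  rewrite <- Rmult_assoc, Rinv_l in H0 by lra. lra.
Qed.

Ltac solve4 := first [left; lra | right; left; lra | right; right; left; lra | right; right; right; lra].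

Lemma merge_alloc n l r l' r' a c :
  is_allocation n l r -> (a < n)%nat -> (c < n)%nat -> a <> c -> l c = r a ->
  l' a = r a -> l' c = l a -> (forall d, d <> a -> d <> c -> l' d = l d) -> (forall d, r' d = r d) ->
  is_allocation n l' r' /\
  (forall t, 0 <= t -> t <= 1 -> exists d, (d < n)%nat /\ d <> a /\ l' d <= t <= r' d).
Proof. intros hA ha hc hac hlc e1 e2 e3 e4. pose proof hA as (B & D & C).
  destruct (B a ha) as (Ba1 & Ba2 & Ba3). destruct (B c hc) as (Bc1 & Bc2 & Bc3).
  assert (cov : forall t, 0 <= t -> t <= 1 -> exists d, (d < n)%nat /\ d <> a /\ l' d <= t <= r' d).
  { intros t h0 h1. destruct (C t h0 h1) as [d [hd [t1 t2]]].
    destruct (Nat.eq_dec d a). subst d. exists c. rewrite e2, e4. repeat split; auto; lra.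
    destruct (Nat.eq_dec d c). subst d. exists c. rewrite e2, e4. repeat split; auto; lra.
    exists d. rewrite e3, e4 by auto. repeat split; auto; lra. }
  split; auto. split; [|split].
  - intros d hd. rewrite e4. destruct (Nat.eq_dec d a). subst; rewrite e1; lra.
    destruct (Nat.eq_dec d c). subst; rewrite e2; lra. rewrite e3 by auto. apply B; auto.
  - intros d e hd he hne. rewrite !e4.
    destruct (B d hd) as (Bd1 & Bd2 & Bd3). destruct (B e he) as (Be1 & Be2 & Be3).
    destruct (Nat.eq_dec d a). subst; rewrite e1; solve4.
    destruct (Nat.eq_dec e a). subst; rewrite e1; solve4.
    destruct (Nat.eq_dec d c). 
    { subst. rewrite e2, (e3 e) by auto.
      destruct (D c e hc he hne) as [|[|[|]]]; destruct (D a e ha he ltac:(auto)) as [|[|[|]]]; solve4. }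
    destruct (Nat.eq_dec e c).
    { subst. rewrite e2, (e3 d) by auto.
      destruct (D d c hd hc hne) as [|[|[|]]]; destruct (D d a hd ha ltac:(auto)) as [|[|[|]]]; solve4. }
    rewrite (e3 d), (e3 e) by auto. apply D; auto.
  - intros t h0 h1. destruct (cov t h0 h1) as [d [? [? ?]]]. exists d; auto.
Qed.

Lemma split_alloc n l r l' r' a b z :
  is_allocation n l r -> (forall t, 0 <= t -> t <= 1 -> exists d, (d < n)%nat /\ d <> a /\ l d <= t <= r d) ->
  (a < n)%nat -> (b < n)%nat -> a <> b -> l b <= z -> z <= r b ->
  ((l' a = l b /\ r' a = z /\ l' b = z /\ r' b = r b) \/ (l' b = l b /\ r' b = z /\ l' a = z /\ r' a = r b)) ->
  (forall d, d <> a -> d <> b -> l' d = l d /\ r' d = r d) ->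
  is_allocation n l' r'.
Proof. intros hA cov ha hb hab hz1 hz2 V E. pose proof hA as (B & D & C).
  destruct (B b hb) as (Bb1 & Bb2 & Bb3).
  split; [|split].
  - intros d hd. destruct (Nat.eq_dec d a). subst; destruct V as [(?&?&?&?)|(?&?&?&?)]; lra.
    destruct (Nat.eq_dec d b). subst; destruct V as [(?&?&?&?)|(?&?&?&?)]; lra.
    destruct (E d) as [-> ->]; auto.
  - intros d e hd he hne.
    destruct (B d hd) as (Bd1 & Bd2 & Bd3). destruct (B e he) as (Be1 & Be2 & Be3).
    destruct (Nat.eq_dec d a); destruct (Nat.eq_dec e a); try (subst; lia).
    + subst. destruct (Nat.eq_dec e b). subst; destruct V as [(?&?&?&?)|(?&?&?&?)]; solve4.
      destruct (E e) as [-> ->]; auto.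
      destruct V as [(?&?&?&?)|(?&?&?&?)]; destruct (D b e hb he ltac:(auto)) as [|[|[|]]]; solve4.
    + subst. destruct (Nat.eq_dec d b). subst; destruct V as [(?&?&?&?)|(?&?&?&?)]; solve4.
      destruct (E d) as [-> ->]; auto.
      destruct V as [(?&?&?&?)|(?&?&?&?)]; destruct (D d b hd hb ltac:(auto)) as [|[|[|]]]; solve4.
    + destruct (Nat.eq_dec d b).
      { subst. destruct (E e) as [-> ->]; auto.
        destruct V as [(?&?&?&?)|(?&?&?&?)]; destruct (D b e hb he ltac:(auto)) as [|[|[|]]]; solve4. }
      destruct (Nat.eq_dec e b).
      { subst. destruct (E d) as [-> ->]; auto.
        destruct V as [(?&?&?&?)|(?&?&?&?)]; destruct (D d b hd hb ltac:(auto)) as [|[|[|]]]; solve4. }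
      destruct (E d) as [-> ->]; auto. destruct (E e) as [-> ->]; auto.
  - intros t h0 h1. destruct (cov t h0 h1) as [d [hd [hda [t1 t2]]]].
    destruct (Nat.eq_dec d b).
    + subst. destruct V as [(?&?&?&?)|(?&?&?&?)]; destruct (Rle_dec t z).
      * exists a; split; auto; lra.
      * exists b; split; auto; lra.
      * exists b; split; auto; lra.
      * exists a; split; auto; lra.
    + exists d. destruct (E d) as [-> ->]; auto.
Qed.

Lemma finish n v ls rs l2 r2 a b :
  (forall d, (d < n)%nat -> valuation (v d)) -> is_allocation n l2 r2 ->
  NSW n v l2 r2 <= NSW n v ls rs ->
  (forall d, (d < n)%nat -> 0 < v d (ls d) (rs d)) -> (a < n)%nat -> (b < n)%nat -> a <> b ->
  v a (l2 a) (r2 a) > 2 * v a (ls a) (rs a) ->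
  v b (l2 b) (r2 b) >= / 2 * v b (ls b) (rs b) ->
  (forall d, (d < n)%nat -> d <> a -> d <> b -> v d (l2 d) (r2 d) >= v d (ls d) (rs d)) -> False.
Proof. intros hv hA hN hf ha hb hab Ea Eb Ed.
  pose proof hA as (B & _ & _).
  set (f := fun d => v d (ls d) (rs d)). set (g := fun d => v d (l2 d) (r2 d)).
  assert (Ea' : g a > 2 * f a) by exact Ea. assert (Eb' : g b >= /2 * f b) by exact Eb.
  assert (hf' : forall d, (d<n)%nat -> 0 < f d) by exact hf.
  assert (Ed' : forall d, (d < n)%nat -> d <> a -> d <> b -> g d >= f d) by exact Ed.
  clear Ea Eb Ed. rename Ea' into Ea, Eb' into Eb, Ed' into Ed. clear hf; rename hf' into hf.
  assert (g0 : forall d, (d < n)%nat -> 0 <= g d).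
  { intros d hd; unfold g; destruct (B d hd) as (?&?&?); apply val_nn; auto. }
  set (h' := fun d => if Nat.eqb d a then g a else f d).
  set (h := fun d => if Nat.eqb d b then / 2 * f b else h' d).
  assert (E1 : prodR n h * h' b = prodR n h' * (/2 * f b)) by (apply prodR_upd; auto).
  assert (E2 : prodR n h' * f a = prodR n f * g a) by (apply prodR_upd; auto).
  assert (hb' : h' b = f b) by (unfold h'; destruct (Nat.eqb_spec b a); [lia|auto]).
  rewrite hb' in E1.
  assert (fa := hf a ha). assert (fb := hf b hb).
  assert (Pf : 0 < prodR n f) by (apply prodR_pos; auto).
  assert (E3 : prodR n h * (f a * f b) = prodR n f * (g a * (/2 * f b))).
  { replace (prodR n h * (f a * f b)) with ((prodR n h * f b) * f a) by ring. rewrite E1.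
    replace (prodR n h' * (/ 2 * f b) * f a) with ((prodR n h' * f a) * (/ 2 * f b)) by ring. rewrite E2. ring. }
  assert (prodR n f * (f a * f b) < prodR n h * (f a * f b)).
  { rewrite E3. apply Rmult_lt_compat_l; auto. nra. }
  apply Rmult_lt_reg_r in H. 2: nra.
  assert (prodR n h <= prodR n g).
  { apply prodR_le. intros d hd. unfold h, h'. destruct (Nat.eqb_spec d b).
    subst; split; [nra|]. lra.
    destruct (Nat.eqb_spec d a). subst. split; [apply g0; auto| lra].
    split; [left; apply hf; auto|]. apply Rge_le, Ed; auto. }
  revert hN. unfold NSW. fold f g. destruct (Rlt_dec 0 (prodR n f)); [|lra].
  destruct (Rlt_dec 0 (prodR n g)); [|lra]. unfold Rpower. intros hN.
  assert (0 < INR n) by (apply lt_0_INR; lia).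
  assert (ln (prodR n f) < ln (prodR n g)) by (apply ln_increasing; lra).
  assert (/ INR n * ln (prodR n f) < / INR n * ln (prodR n g)).
  { apply Rmult_lt_compat_l; auto. apply Rinv_0_lt_compat; auto. }
  apply exp_increasing in H3. lra.
Qed.

Lemma val_pos_neq v x y : valuation v -> 0 <= x -> x <= y -> y <= 1 -> 0 < v x y -> x < y.
Proof. intros hv h0 h1 h2 hp. destruct (Rle_lt_or_eq_dec _ _ h1); auto. subst. rewrite val_zero in hp; auto; lra. Qed.

Lemma core n v ls rs a b :
  (forall d, (d < n)%nat -> valuation (v d)) -> nash_optimal n v ls rs ->
  (forall d, (d < n)%nat -> 0 < v d (ls d) (rs d)) ->
  (a < n)%nat -> (b < n)%nat -> a <> b -> rs a <= ls b ->
  v a (ls a) (rs a) >= / 4 * v a (ls b) (rs b).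
Proof. intros hv [hA hopt] hf ha hb hab hrl.
  pose proof hA as (SB & SD & SC).
  apply Rnot_lt_ge; intro hlt.
  destruct (SB a ha) as (Ba1 & Ba2 & Ba3). destruct (SB b hb) as (Bb1 & Bb2 & Bb3).
  assert (fa := hf a ha). assert (fb := hf b hb).
  assert (hva := hv a ha). assert (hvb := hv b hb).
  assert (lta : ls a < rs a) by (apply (val_pos_neq (v a)); auto).
  assert (ltb : ls b < rs b) by (apply (val_pos_neq (v a)); auto; lra).
  destruct (right_cover n ls rs (rs a) hA) as [c [hc [c1 c2]]]; try lra.
  destruct (SB c hc) as (Bc1 & Bc2 & Bc3).
  assert (hac : a <> c) by (intro; subst; lra).
  assert (hlc : ls c = rs a) by (destruct (SD a c ha hc hac) as [|[|[|]]]; lra).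
  set (l1 := fun d => if Nat.eqb d a then rs a else if Nat.eqb d c then ls a else ls d).
  destruct (merge_alloc n ls rs l1 rs a c hA ha hc hac hlc) as [hA1 cov1].
  { unfold l1. rewrite Nat.eqb_refl. auto. }
  { unfold l1. destruct (Nat.eqb_spec c a). lia. rewrite Nat.eqb_refl. auto. }
  { intros d h1 h2. unfold l1. destruct (Nat.eqb_spec d a). lia. destruct (Nat.eqb_spec d c). lia. auto. }
  { auto. }
  assert (L1 : forall d, (d < n)%nat -> d <> a -> 0 <= l1 d /\ l1 d <= ls d).
  { intros d hd hda. unfold l1. destruct (Nat.eqb_spec d a). lia. destruct (Nat.eqb_spec d c). subst; lra.
    destruct (SB d hd); lra. }
  destruct (L1 b hb ltac:(auto)) as [L1b1 L1b2].
  assert (Vd : forall d, (d < n)%nat -> d <> a -> v d (l1 d) (rs d) >= v d (ls d) (rs d)).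
  { intros d hd hda. destruct (L1 d hd hda). destruct (SB d hd) as (?&?&?). apply Rle_ge.
    apply val_mono; auto; lra. }
  pose proof hvb as (_ & _ & Hdiv & _).
  destruct (Hdiv (ls b) (rs b) (/2)) as [z [z1 [z2 z3]]]; try lra.
  assert (zb : v b z (rs b) = / 2 * v b (ls b) (rs b)).
  { rewrite (val_add (v b) (ls b) z (rs b)) in z3 |- *; auto; lra. }
  assert (za : v a (ls b) (rs b) = v a (ls b) z + v a z (rs b)) by (apply val_add; auto; lra).
  destruct (Rle_dec (/2 * v a (ls b) (rs b)) (v a (ls b) z)).
  - set (l2 := fun d => if Nat.eqb d a then l1 b else if Nat.eqb d b then z else l1 d).
    set (r2 := fun d => if Nat.eqb d a then z else if Nat.eqb d b then rs b else rs d).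
    assert (e2a : l2 a = l1 b /\ r2 a = z) by (unfold l2, r2; rewrite Nat.eqb_refl; auto).
    assert (e2b : l2 b = z /\ r2 b = rs b).
    { unfold l2, r2. destruct (Nat.eqb_spec b a). lia. rewrite Nat.eqb_refl; auto. }
    assert (e2d : forall d, d <> a -> d <> b -> l2 d = l1 d /\ r2 d = rs d).
    { intros d h1 h2. unfold l2, r2. destruct (Nat.eqb_spec d a). lia. destruct (Nat.eqb_spec d b). lia. auto. }
    assert (hA2 : is_allocation n l2 r2).
    { apply (split_alloc n l1 rs l2 r2 a b z); auto; try lra; try (left; destruct e2a, e2b; auto). }
    apply (finish n v ls rs l2 r2 a b); auto.
    + destruct e2a as [-> ->]. assert (v a (ls b) z <= v a (l1 b) z) by (apply val_mono; auto; lra). lra.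
    + destruct e2b as [-> ->]. lra.
    + intros d hd h1 h2. destruct (e2d d h1 h2) as [-> ->]. apply Vd; auto.
  - set (l2 := fun d => if Nat.eqb d a then z else if Nat.eqb d b then l1 b else l1 d).
    set (r2 := fun d => if Nat.eqb d a then rs b else if Nat.eqb d b then z else rs d).
    assert (e2a : l2 a = z /\ r2 a = rs b) by (unfold l2, r2; rewrite Nat.eqb_refl; auto).
    assert (e2b : l2 b = l1 b /\ r2 b = z).
    { unfold l2, r2. destruct (Nat.eqb_spec b a). lia. rewrite Nat.eqb_refl; auto. }
    assert (e2d : forall d, d <> a -> d <> b -> l2 d = l1 d /\ r2 d = rs d).
    { intros d h1 h2. unfold l2, r2. destruct (Nat.eqb_spec d a). lia. destruct (Nat.eqb_spec d b). lia. auto. }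
    assert (hA2 : is_allocation n l2 r2).
    { apply (split_alloc n l1 rs l2 r2 a b z); auto; try lra; try (right; destruct e2a, e2b; auto). }
    apply (finish n v ls rs l2 r2 a b); auto.
    + destruct e2a as [-> ->]. lra.
    + destruct e2b as [-> ->]. assert (v b (ls b) z <= v b (l1 b) z) by (apply val_mono; auto; lra). lra.
    + intros d hd h1 h2. destruct (e2d d h1 h2) as [-> ->]. apply Vd; auto.
Qed.

Lemma onemm x : 1 - (1 - x) = x. Proof. ring. Qed.

Lemma valuation_refl w : valuation w -> valuation (fun x y => w (1 - y) (1 - x)).
Proof. intros hw. pose proof hw as (Hn & H1 & Hd & Ha). split; [|split; [|split]].
  - intros x y h0 h1 h2. apply Hn; lra.
  - replace (1 - 1) with 0 by ring. replace (1 - 0) with 1 by ring. auto.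
  - intros x y lam h0 h1 h2 h3 h4.
    destruct (Hd (1 - y) (1 - x) (1 - lam)) as [z [z1 [z2 z3]]]; try lra.
    exists (1 - z). rewrite onemm. split; [lra|split; [lra|]].
    rewrite (Ha (1 - y) z (1 - x)) in z3 |- *; try lra.
  - intros x y z h0 h1 h2 h3. rewrite (Ha (1 - z) (1 - y) (1 - x)); lra.
Qed.

Lemma alloc_refl n l r : is_allocation n l r -> is_allocation n (fun d => 1 - r d) (fun d => 1 - l d).
Proof. intros (B & D & C). split; [|split].
  - intros d hd. destruct (B d hd); lra.
  - intros d e hd he hne. destruct (D d e hd he hne) as [|[|[|]]]; solve4.
  - intros t h0 h1. destruct (C (1 - t)) as [d [hd [? ?]]]; try lra. exists d; split; auto; lra.
Qed.

Lemma NSW_refl n v l r :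
  NSW n (fun d x y => v d (1 - y) (1 - x)) (fun d => 1 - r d) (fun d => 1 - l d) = NSW n v l r.
Proof. unfold NSW. rewrite (prodR_ext n _ (fun a => v a (l a) (r a))). reflexivity.
  intros i _. rewrite !onemm. reflexivity. Qed.

Lemma nash_refl n v ls rs : nash_optimal n v ls rs ->
  nash_optimal n (fun d x y => v d (1 - y) (1 - x)) (fun d => 1 - rs d) (fun d => 1 - ls d).
Proof. intros [hA hopt]. split. apply alloc_refl; auto.
  intros l' r' hA'. rewrite NSW_refl.
  change (NSW n v (fun d => 1 - r' d) (fun d => 1 - l' d) <= NSW n v ls rs).
  apply hopt. apply alloc_refl; auto. Qed.

Theorem theorem4 (n : nat) (v : nat -> R -> R -> R)
  (hv : forall a, (a < n)%nat -> valuation (v a))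
  (alpha : R) (halpha : 1 <= alpha)
  (lt rt : nat -> R) (hT : is_allocation n lt rt)
  (hEF : approx_EF n v alpha lt rt)
  (ls rs : nat -> R) (hS : nash_optimal n v ls rs) :
  NSW n v lt rt >= / (2 * alpha) * NSW n v ls rs /\
  approx_EF n v 4 ls rs.
Proof. split.
  - apply part1; auto. destruct hS; auto.
  - intros a b ha hb. destruct hS as [hA hopt] eqn:hSe. pose proof hA as (SB & SD & SC).
    assert (hu := u_pos n v alpha lt rt hv halpha hT hEF).
    assert (N1 : 0 < NSW n v lt rt).
    { unfold NSW. destruct (Rlt_dec _ _). apply exp_pos. exfalso; apply n0, prodR_pos; auto. }
    assert (N2 := hopt lt rt hT).
    assert (P : 0 < prodR n (fun d => v d (ls d) (rs d))).
    { assert (Hq : NSW n v ls rs > 0) by lra. unfold NSW in Hq. destruct (Rlt_dec 0 (prodR n (fun d => v d (ls d) (rs d)))); auto. lra. }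
    assert (hf : forall d, (d < n)%nat -> 0 < v d (ls d) (rs d)).
    { apply (prodR_pos_factor n (fun d => v d (ls d) (rs d))); auto.
      intros d hd. destruct (SB d hd) as (?&?&?). apply val_nn; auto. }
    destruct (Nat.eq_dec a b). { subst. generalize (hf b hb); lra. }
    destruct (SB a ha) as (?&?&?). destruct (SB b hb) as (?&?&?).
    destruct (SD a b ha hb n0) as [e|[e|[e|e]]].
    + exfalso. generalize (hf a ha). rewrite e, val_zero; auto; lra.
    + rewrite e, val_zero; auto; try lra. generalize (hf a ha); lra.
    + apply (core n v ls rs a b); auto.
    + assert (H5 := core n (fun d x y => v d (1 - y) (1 - x)) (fun d => 1 - rs d) (fun d => 1 - ls d) a b).
      cbv beta in H5. rewrite !onemm in H5. apply H5; auto; try lra.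
      * intros d hd. apply valuation_refl; auto.
      * apply nash_refl; auto.
      * intros d hd. rewrite !onemm. auto.
Qed.
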